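(* Let $\lambda,s\in\mathbb{C}$ be parameters and consider sequences $(x_n,y_n)$ satisfying the recurrence $$x_n x_{n+1}=\frac{n-y_n}{2y_n^2+2\lambda y_n},\qquad y_n+y_{n-1}=-\frac{2\lambda x_n^2-s x_n-1}{2x_n^2}.$$ This recurrence is equivalent to the discrete Painlevé equation $$\overline{q}+q=p-t-\frac{a_2}{p},\qquad p+\underline{p}=q+t+\frac{a_1}{q},$$ with root variables $a_0,a_1,a_2$ satisfying $a_0+a_1+a_2=1$ and evolving under the step $n\mapsto n+1$ as $\overline{a}_0=a_0$, $\overline{a}_1=a_1-1$, $\overline{a}_2=a_2+1$. The equivalence is given by the change of variables $$x(q,p)=\frac{q}{\sqrt{2}\,(a_1-qp)},\qquad y(q,p)=qp-a_1,\qquad s(t)=\sqrt{2}\,t,$$ with inverse $$q(x,y)=-\sqrt{2}\,xy,\qquad p(x,y)=\frac{n-y}{\sqrt{2}\,xy},\qquad t(s)=\frac{s}{\sqrt{2}},$$ and the parameters are related by $$a_0=1-\lambda,\qquad a_1=-n,\qquad a_2=n+\lambda.$$ That is, setting $q_n=-\sqrt2 x_ny_n$, $p_n=\frac{n-y_n}{\sqrt2 x_ny_n}$, $t=s/\sqrt2$, the pair $(x_n,y_n)$ satisfies the recurrence above if and only if $q_{n+1}+q_n=p_n-t-\frac{n+\lambda}{p_n}$ and $p_n+p_{n-1}=q_n+t-\frac{n}{q_n}$ (whenever all expressions are defined).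
   Context: Here $\overline{q},\underline{p}$ denote the values of $q$ at step $n+1$ and of $p$ at step $n-1$ respectively, while $q,p,a_1,a_2$ are taken at step $n$. Origin of the recurrence: for the weight $w(x)=x^\lambda e^{-x^2+sx}$ on $(0,\infty)$ ($\lambda>-1$, $s\in\mathbb{R}$), with ladder-operator quantities $R_n(s)$, $r_n(s)$, one sets $x_n=1/R_{n-1}(s)$ and $y_n=-r_n(s)$; the theorem itself concerns only the displayed recurrence. The target system is the standard discrete Painlevé equation of type d-$\mathrm{P}(A_2^{(1)}/E_6^{(1)})$ in the normalization of Kajiwara–Noumi–Yamada. *)

(* Defs.v *)
(* The paper works over the complex numbers; we state the
   (purely algebraic) result over an arbitrary numeric algebraically closed
   field C (this includes the complex numbers, e.g. R[i] for R : rcfType). *)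
From HB Require Import structures.
From mathcomp Require Import all_boot all_order all_algebra.
Set Implicit Arguments.
Unset Strict Implicit.
Unset Printing Implicit Defensive.
Import Order.TTheory GRing.Theory Num.Theory.
Local Open Scope ring_scope.

Section DefsSec.
Variable C : numClosedFieldType.

Definition a0 (lam : C) (n : nat) : C := 1 - lam.
Definition a1 (n : nat) : C := - (n%:R).
Definition a2 (lam : C) (n : nat) : C := n%:R + lam.

Definition qv (x y : nat -> C) (n : nat) : C := - sqrtC 2 * x n * y n.
Definition pv (x y : nat -> C) (n : nat) : C :=
  (n%:R - y n) / (sqrtC 2 * x n * y n).
Definition tv (s : C) : C := s / sqrtC 2.

Definition rec1 (lam : C) (x y : nat -> C) (n : nat) : Prop :=
  x n * x n.+1 = (n%:R - y n) / (2 * y n ^+ 2 + 2 * lam * y n).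
(* second equation at step n+1 (it involves y_{n}, i.e. index n-1 at n+1) *)
Definition rec2 (lam s : C) (x y : nat -> C) (n : nat) : Prop :=
  y n.+1 + y n = - ((2 * lam * x n.+1 ^+ 2 - s * x n.+1 - 1) / (2 * x n.+1 ^+ 2)).

Definition dP1 (lam s : C) (x y : nat -> C) (n : nat) : Prop :=
  qv x y n.+1 + qv x y n = pv x y n - tv s - a2 lam n / pv x y n.
Definition dP2 (s : C) (x y : nat -> C) (n : nat) : Prop :=
  pv x y n.+1 + pv x y n = qv x y n.+1 + tv s + a1 n.+1 / qv x y n.+1.

End DefsSec.

(* Main.v *)
Require Import Defs.
From HB Require Import structures.
From mathcomp Require Import all_boot all_order all_algebra.
From mathcomp Require Import ring.
Import Order.TTheory GRing.Theory Num.Theory.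
Local Open Scope ring_scope.

Lemma eq_from (F : fieldType) (A B C D k : F) :
  C - D = k * (A - B) -> A = B -> C = D.
Proof. by move=> e AB; apply/eqP; rewrite -subr_eq0 e AB subrr mulr0. Qed.

Ltac nz := rewrite ?negb_and ?negb_or ?mulf_eq0 ?invr_eq0 ?expf_eq0 ?oppr_eq0 ?negb_or /=;
  repeat match goal with H : (?a == 0) = false |- context [?a == 0] => rewrite H end;
  rewrite ?eqxx ?andbT ?orbF ?orbT ?andbF ?andTb ?orFb //=.

Lemma key (F : fieldType) (r lam s N N1 X Y X' Y' : F)
  (hr : r * r = 2) (hr0 : r != 0) (hN1 : N1 = N + 1)
  (hX : X != 0) (hY : Y != 0) (hX' : X' != 0) (hY' : Y' != 0)
  (hYl : Y + lam != 0) (hYN : Y != N) :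
  (X * X' = (N - Y) / (2 * Y ^+ 2 + 2 * lam * Y) /\
   Y' + Y = - ((2 * lam * X' ^+ 2 - s * X' - 1) / (2 * X' ^+ 2))) <->
  (- r * X' * Y' + - r * X * Y = (N - Y) / (r * X * Y) - s / r
      - (N + lam) / ((N - Y) / (r * X * Y)) /\
   (N1 - Y') / (r * X' * Y') + (N - Y) / (r * X * Y)
     = - r * X' * Y' + s / r + - N1 / (- r * X' * Y')).
Proof.
subst N1; rewrite -hr.
have hNY : N - Y != 0 by rewrite subr_eq0 eq_sym.
have hD : r * r * Y ^+ 2 + r * r * lam * Y != 0.
  have -> : r * r * Y ^+ 2 + r * r * lam * Y = r * r * Y * (Y + lam) by ring.
  by rewrite !mulf_neq0.
move/negbTE: hr0 => hr0; move/negbTE: hX => hX; move/negbTE: hY => hY.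
move/negbTE: hX' => hX'; move/negbTE: hY' => hY'; move/negbTE: hYl => hYl.
move/negbTE: hNY => hNY; move/negbTE: hD => hD.

split.
- case=> h1 h2.
  have eX : X' = (N - Y) / (r * r * Y ^+ 2 + r * r * lam * Y) / X.
    apply: (@eq_from _ _ _ _ _ X^-1 _ h1). field. nz.
  split.
    apply: (@eq_from _ _ _ _ _ (- (r * X')) _ h2). rewrite eX. field. nz.
  apply: (@eq_from _ _ _ _ _ (r * X') _ h2). rewrite eX. field. nz.
- case=> h3 h4.
  have eY : Y' = (s / r + 1 / (r * X') - (N - Y) / (r * X * Y)) / (r * X').
    apply: (@eq_from _ _ _ _ _ (r * X')^-1 _ h4). field. nz.
  have h1 : X * X' = (N - Y) / (r * r * Y ^+ 2 + r * r * lam * Y).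
    apply: (@eq_from _ _ _ _ _ (X * ((N - Y) / (r * X * Y)) * X' / (Y + lam)) _ h3).
    rewrite eY. field. nz.
  have eX : X' = (N - Y) / (r * r * Y ^+ 2 + r * r * lam * Y) / X.
    apply: (@eq_from _ _ _ _ _ X^-1 _ h1). field. nz.
  split => //.
  apply: (@eq_from _ _ _ _ _ (r * X')^-1 _ h4). rewrite eX. field. nz.
Qed.

Theorem theorem1p1 (C : numClosedFieldType) (lam s : C) (x y : nat -> C)
  (hx : forall n, x n != 0) (hy : forall n, y n != 0)
  (hyl : forall n, y n + lam != 0) (hyn : forall n, y n != n%:R) :
  ((forall n, rec1 lam x y n) /\ (forall n, rec2 lam s x y n)) <->
  ((forall n, dP1 lam s x y n) /\ (forall n, dP2 s x y n)).
Proof.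
have hr : sqrtC (2 : C) * sqrtC 2 = 2 by rewrite -expr2 sqrtCK.
have hr0 : sqrtC (2 : C) != 0 by rewrite sqrtC_eq0 pnatr_eq0.
have per : forall n, (rec1 lam x y n /\ rec2 lam s x y n) <->
                     (dP1 lam s x y n /\ dP2 s x y n).
  move=> n; rewrite /rec1 /rec2 /dP1 /dP2 /qv /pv /tv /a1 /a2.
  apply: key => //; by rewrite -natr1.
split.
- case=> h1 h2; split=> n; by case: (per n) => /(_ (conj (h1 n) (h2 n))) [].
- case=> h1 h2; split=> n; by case: (per n) => _ /(_ (conj (h1 n) (h2 n))) [].
Qed.
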